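(* Every nonzero finite-dimensional left $\mathcal{O}_{nc}(B^+)$-comodule $W$ contains a semi-invariant, i.e. a nonzero $w\in W$ with coaction $w\mapsto g\otimes w$ for some grouplike element $g\in\mathcal{O}_{nc}(B^+)$; moreover $g$ can be taken of the form $a^id^j$.
   Context: $\mathcal{O}_{nc}(\mathrm{GL}_2)$ is the Hopf algebra generated by $a,b,c,d,\delta,\delta^{-1}$ with relations $ac=ca$, $bd=db$, $ad-cb=\delta=da-bc$, $\delta\delta^{-1}=1=\delta^{-1}\delta$, $a\delta^{-1}d-b\delta^{-1}c=1=d\delta^{-1}a-c\delta^{-1}b$, $b\delta^{-1}a=a\delta^{-1}b$, $c\delta^{-1}d=d\delta^{-1}c$, with $\Delta(a)=a\otimes a+b\otimes c$, $\Delta(b)=a\otimes b+b\otimes d$, $\Delta(c)=c\otimes a+d\otimes c$, $\Delta(d)=c\otimes b+d\otimes d$, $\Delta(\delta^{\pm1})=\delta^{\pm1}\otimes\delta^{\pm1}$. $\mathcal{O}_{nc}(B^+):=\mathcal{O}_{nc}(\mathrm{GL}_2)/(c)$, a quotient Hopf algebra in which the images of $a,d$ are invertible grouplike elements and $\Delta(b)=a\otimes b+b\otimes d$. $k$ algebraically closed. *)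

(* Defs.v *)
From HB Require Import structures.
From mathcomp Require Import all_boot all_order all_algebra.
Set Implicit Arguments. Unset Strict Implicit. Unset Printing Implicit Defensive.
Import Order.TTheory GRing.Theory Num.Theory.
Local Open Scope ring_scope.

Inductive letter := LA | LAi | LB | LD | LDi.

(* Basis monomials of O_nc(B^+):
   (m, (e0, [:: e1; ...; ek]))  stands for  d^m a^e0 b a^e1 b ... b a^ek. *)
Definition Mon := (int * (int * seq int))%type.

Fixpoint nf (w : seq letter) : Mon :=
  match w with
  | [::] => (0, (0, [::]))
  | l :: w' =>
    let: (m, (e0, es)) := nf w' in
    match l with
    | LA => (m, (e0 + 1, es))
    | LAi => (m, (e0 - 1, es))
    | LB => (m, (0, e0 :: es))
    | LD => (m + 1, (e0, es))
    | LDi => (m - 1, (e0, es))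
    end
  end.

Definition powl (pos neg : letter) (z : int) : seq letter :=
  match z with
  | Posz n => nseq n pos
  | Negz n => nseq n.+1 neg
  end.

Definition word_of_mon (x : Mon) : seq letter :=
  let: (m, (e0, es)) := x in
  powl LD LDi m ++ powl LA LAi e0 ++ flatten [seq LB :: powl LA LAi e | e <- es].

(* comultiplication on generators (c = 0):
   D(a)=a⊗a, D(a^-1)=a^-1⊗a^-1, D(b)=a⊗b+b⊗d, D(d)=d⊗d, D(d^-1)=d^-1⊗d^-1 *)
Definition dterms (l : letter) : seq (seq letter * seq letter) :=
  match l with
  | LA => [:: ([:: LA], [:: LA])]
  | LAi => [:: ([:: LAi], [:: LAi])]
  | LB => [:: ([:: LA], [:: LB]); ([:: LB], [:: LD])]
  | LD => [:: ([:: LD], [:: LD])]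
  | LDi => [:: ([:: LDi], [:: LDi])]
  end.

(* multiplicative expansion of the comultiplication of a word:
   a list of simple tensors (x ⊗ y) whose sum is D(word) *)
Fixpoint delta_word (w : seq letter) : seq (seq letter * seq letter) :=
  match w with
  | [::] => [:: ([::], [::])]
  | l :: w' => [seq (t.1 ++ p.1, t.2 ++ p.2) | t <- dterms l, p <- delta_word w']
  end.

(* structure constant: coefficient of mu ⊗ nu in D(lam) *)
Definition coef_delta (lam mu nu : Mon) : nat :=
  count (fun p => (nf p.1 == mu) && (nf p.2 == nu)) (delta_word (word_of_mon lam)).

Definition eps_mon (lam : Mon) : nat := if lam.2.2 is [::] then 1%N else 0%N.

Definition mon_ad (i j : int) : Mon := (j, (i, [::])).

(* A linear map
   rho : W -> O_nc(B^+) ⊗ W is encoded as  rho(w) = sum_{mu in S} mu ⊗ (r mu w)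
   with S a finite duplicate-free list of basis monomials containing the
   support of r : Mon -> 'End(W). *)
Definition is_left_comodule (k : fieldType) (W : vectType k)
  (S : seq Mon) (r : Mon -> 'End(W)) : Prop :=
  [/\ uniq S,
      (forall mu, mu \notin S -> r mu = 0),
      (* coassociativity: (D ⊗ id) rho = (id ⊗ rho) rho *)
      (forall mu nu, \sum_(lam <- S) (coef_delta lam mu nu)%:R *: r lam
                     = (r nu \o r mu)%VF) &
      (* counit: (eps ⊗ id) rho = id *)
      \sum_(lam <- S) (eps_mon lam)%:R *: r lam = \1%VF].

(* Main.v *)
Require Import Defs.
From HB Require Import structures.
From mathcomp Require Import all_boot all_order all_algebra.
From mathcomp Require Import zify.
Import Order.TTheory GRing.Theory Num.Theory.
Local Open Scope ring_scope.

Definition isB (l : letter) : bool := if l is LB then true else false.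

Lemma nf_cntB w : size (nf w).2.2 = count isB w.
Proof.
elim: w => //= l w IH.
case: (nf w) IH => m [e es] /= IH; case: l => /=; rewrite IH //.
Qed.

Lemma powl_noB p n z : isB p = false -> isB n = false -> count isB (powl p n z) = 0%N.
Proof. by move=> hp hn; case: z => m /=; rewrite count_nseq ?hp ?hn. Qed.

Lemma word_cntB lam : count isB (word_of_mon lam) = size lam.2.2.
Proof.
case: lam => m [e es] /=. rewrite !count_cat !powl_noB //= !add0n.
elim: es => //= e' es IH; rewrite count_cat powl_noB // IH add0n add1n //.
Qed.

Lemma delta_cnt w :
  all (fun p => count isB p.1 + count isB p.2 == count isB w)%N (delta_word w).
Proof.
elim: w => //= l w IH.
have H : forall (f : seq letter * seq letter -> seq letter * seq letter) n,
  (forall p, count isB (f p).1 + count isB (f p).2 = n + count isB p.1 + count isB p.2)%N ->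
  all (fun p => count isB p.1 + count isB p.2 == n + count isB w)%N (map f (delta_word w)).
  move=> f n hf; rewrite all_map; apply: sub_all IH => p /eqP hp /=.
  by rewrite hf -hp addnA.
case: l => /=; rewrite ?all_cat /= ?andbT; try (apply/andP; split); apply: H => p /=; lia.
Qed.

Lemma all_count_ex (T : Type) (a b : pred T) s :
  all a s -> (0 < count b s)%N -> exists x, a x && b x.
Proof.
elim: s => //= x s IH /andP [ax al].
case bx: (b x) => /=; first by exists x; rewrite ax bx.
by rewrite add0n; apply: IH.
Qed.

Lemma coef_cnt lam mu nu : coef_delta lam mu nu != 0%N ->
  size lam.2.2 = (size mu.2.2 + size nu.2.2)%N.
Proof.
rewrite /coef_delta -lt0n => /(@all_count_ex _ _ _ _ (delta_cnt _)) [p /andP [/eqP H /andP [/eqP h1 /eqP h2]]].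
by rewrite -word_cntB -H -h1 -h2 !nf_cntB.
Qed.

Lemma delta_noB w : count isB w = 0%N -> delta_word w = [:: (w, w)].
Proof.
elim: w => //= l w IH.
case: l => //= H; by rewrite IH.
Qed.

Lemma nf_powlA e : nf (powl LA LAi e) = (0, (e, [::])).
Proof.
case: e => n /=.
  by elim: n => //= n IH; rewrite IH; congr (_, (_, _)); lia.
elim: n => //= n IH.
move: IH => /= ->; congr (_, (_, _)); lia.
Qed.

Lemma nf_powlD m x m0 e0 es : nf x = (m0, (e0, es)) ->
  nf (powl LD LDi m ++ x) = (m0 + m, (e0, es)).
Proof.
move=> Hx; case: m => n /=.
  elim: n => /= [|n IH]; first by rewrite Hx addr0.
  by rewrite IH; congr (_, (_, _)); lia.
elim: n => /= [|n IH]; first by rewrite Hx.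
move: IH => /= ->; congr (_, (_, _)); lia.
Qed.

Lemma coef_grp lam mu nu : lam.2.2 = [::] ->
  coef_delta lam mu nu = ((lam == mu) && (lam == nu)) :> nat.
Proof.
case: lam => m [e es] /= ->.
rewrite /coef_delta.
have Hc : count isB (word_of_mon (m, (e, [::]))) = 0%N by rewrite word_cntB.
rewrite (@delta_noB _ Hc) /= addn0.
have -> : nf (word_of_mon (m, (e, [::]))) = (m, (e, [::])).
  by rewrite /= cats0 (@nf_powlD m _ _ _ _ (nf_powlA e)) add0r.
by [].
Qed.

Lemma argmax_cons (T : eqType) (f : T -> nat) (s : seq T) (y : T) :
  exists x, x \in y :: s /\ forall z, z \in y :: s -> (f z <= f x)%N.
Proof.
elim: s y => [|z s IH] y.
  by exists y; split; [rewrite mem_head|move=> y'; rewrite inE => /eqP ->].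
have [x [xin xm]] := IH z.
case: (leqP (f y) (f x)) => h.
  exists x; split; first by rewrite inE xin orbT.
  by move=> y'; rewrite inE => /orP [/eqP -> // | /xm].
exists y; split; first by rewrite mem_head.
move=> y'; rewrite inE => /orP [/eqP -> // | /xm hy].
by apply: leq_trans hy (ltnW h).
Qed.

Lemma argmax_seq (T : eqType) (f : T -> nat) (s : seq T) x0 :
  x0 \in s -> exists x, x \in s /\ forall y, y \in s -> (f y <= f x)%N.
Proof. by case: s => // y s _; apply: argmax_cons. Qed.

Theorem mainTheorem16 (k : closedFieldType) (W : vectType k)
  (S : seq Mon) (r : Mon -> 'End(W)) :
  (0 < \dim {:W})%N ->
  is_left_comodule S r ->
  exists w : W, w != 0 /\
    exists i j : int, forall mu : Mon, r mu w = if mu == mon_ad i j then w else 0.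
Proof.
move=> hdim [uS r0 coas coun].
have hw0 : vpick (fullv : {vspace W}) != 0.
  by rewrite vpick0 -dimv_eq0 -lt0n.
set w0 := vpick _ in hw0.
have ex_nz : forall v : W, v != 0 -> exists2 l, l \in S & (eps_mon l != 0%N) && (r l v != 0).
  move=> v hv; apply/hasP; apply/negPn/negP => /hasPn hn.
  move: hv; apply/negP; rewrite negbK; apply/eqP.
  have := congr1 (fun f : 'End(W) => f v) coun; rewrite /= id_lfunE sum_lfunE => <-.
  rewrite big1_seq // => l /andP [_ lS]; rewrite scale_lfunE.
  move: (hn l lS); rewrite negb_and !negbK => /orP [/eqP -> | /eqP ->].
    by rewrite scale0r.
  by rewrite scaler0.
have [l0 l0S /andP [_ rl0]] := ex_nz _ hw0.
pose T := [seq mu <- S | r mu w0 != 0].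
have l0T : l0 \in T by rewrite mem_filter rl0 l0S.
have [mu0 [mu0T mu0m]] := @argmax_seq _ (fun x : Mon => size x.2.2) _ _ l0T.
have /andP [rmu0 mu0S] : (r mu0 w0 != 0) && (mu0 \in S).
  by move: mu0T; rewrite mem_filter.
set v := r mu0 w0.
have vz : forall lam, size lam.2.2 != 0%N -> r lam v = 0.
  move=> lam hl.
  have := congr1 (fun f : 'End(W) => f w0) (coas mu0 lam).
  rewrite /= comp_lfunE sum_lfunE -/v => <-.
  rewrite big1_seq // => l /andP [_ lS]; rewrite scale_lfunE.
  case c0 : (coef_delta l mu0 lam == 0%N); first by rewrite (eqP c0) scale0r.
  have hs := @coef_cnt _ _ _ (negbT c0).
  case rl : (r l w0 == 0); first by rewrite (eqP rl) scaler0.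
  have : l \in T by rewrite mem_filter rl lS.
  move/mu0m; rewrite hs; lia.
have [g gS /andP [eg rg]] := ex_nz _ rmu0.
have g0 : g.2.2 = [::] by move: eg; rewrite /eps_mon; case: g.2.2.
exists (r g v); split => //.
exists g.2.1, g.1 => mu.
have hg : mon_ad g.2.1 g.1 = g by case: g g0 {gS eg rg} => m [e es] /= ->.
rewrite hg.
have := congr1 (fun f : 'End(W) => f v) (coas g mu).
rewrite /= comp_lfunE sum_lfunE => <-.
rewrite (bigD1_seq g) //= big1_seq.
  rewrite addr0 scale_lfunE coef_grp // eqxx /= eq_sym.
  by case: (mu == g); rewrite ?scale1r ?scale0r.
move=> l /andP [lg lS]; rewrite scale_lfunE.
case hl : (size l.2.2 == 0%N).
  move: hl; rewrite size_eq0 => /eqP hl.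
  by rewrite coef_grp // (negbTE lg) scale0r.
by rewrite vz ?hl // scaler0.
Qed.
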